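(* Let $n\geq 1$ and let $p,q,t,x$ be indeterminates. Define $$A_n(p,q,t)=\sum_{\sigma\in\mathfrak{S}_n}p^{\mathsf{nest}\,\sigma}q^{\mathsf{cros}\,\sigma}t^{\mathsf{exc}\,\sigma}.$$ Then $$A_{n}(p, q, t)=\left(\frac{1+xt}{1+x}\right)^{n-1}P^{(\mathsf{nest}, \mathsf{cros},\mathsf{cpk}^*,\mathsf{exc})}\left(\mathfrak{S}_n; p, q, \frac{(1+x)^{2}t}{(x+t)(1+xt)},\frac{x+t}{1+xt}\right),$$ equivalently, $$P^{(\mathsf{nest}, \mathsf{cros}, \mathsf{cpk}^*,\mathsf{exc})}(\mathfrak{S}_n; p, q, x,t)=\left(\frac{1+u}{1+uv}\right)^{n-1}A_{n}(p, q, v),$$ where $u=\frac{1+t^{2}-2xt-(1-t)\sqrt{(1+t)^{2}-4xt}}{2(1-x)t}$ and $v=\frac{(1+t)^{2}-2xt-(1+t)\sqrt{(1+t)^{2}-4xt}}{2xt}$.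
   Context: $\mathfrak{S}_n$ is the set of permutations of $[n]=\{1,\dots,n\}$. For a finite set $\Omega$ of permutations and statistics $\mathsf{stat}_1,\dots,\mathsf{stat}_m$, $P^{(\mathsf{stat}_1,\ldots,\mathsf{stat}_m)}(\Omega;t_1,\ldots,t_m)=\sum_{\sigma\in\Omega}t_1^{\mathsf{stat}_1\sigma}\cdots t_m^{\mathsf{stat}_m\sigma}$. For $\sigma\in\mathfrak{S}_n$: $\mathsf{exc}\,\sigma=\#\{i:\sigma(i)>i\}$; for $i\in[n]$, $\mathsf{nest}_i\sigma=\#\{j: j<i<\sigma(i)<\sigma(j)\text{ or }\sigma(j)<\sigma(i)\le i<j\}$ and $\mathsf{cros}_i\sigma=\#\{j: j<i<\sigma(j)<\sigma(i)\text{ or }\sigma(i)<\sigma(j)\le i<j\}$; $\mathsf{nest}=\sum_i\mathsf{nest}_i$, $\mathsf{cros}=\sum_i\mathsf{cros}_i$. The star companion $\sigma^*$ is the permutation of $\{0,1,\dots,n\}$ with $\sigma^*(0)=n$ and $\sigma^*(i)=\sigma(i)-1$ for $i\in[n]$. Then $\mathsf{cpk}^*\sigma=\#\{i\in[n-1]:(\sigma^* )^{-1}(i)<i>\sigma^*(i)\}$. *)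

(* Defs.v *)
From HB Require Import structures.
From mathcomp Require Import all_boot all_order all_algebra all_fingroup.
Set Implicit Arguments. Unset Strict Implicit. Unset Printing Implicit Defensive.
Import GRing.Theory.

(* Convention: a permutation sigma of [n] = {1..n} is represented by
   s : 'S_n acting on 'I_n = {0..n-1}, via sigma(i) = (s (i-1)) + 1.
   All comparisons below are between positions and values shifted by the
   same amount, so the statistics coincide with the paper's. *)

Section Stats.
Variable n : nat.
Implicit Type s : 'S_n.

Definition exc s : nat := #|[set i : 'I_n | i < s i]|.

Definition nest_i s (i : 'I_n) : nat :=
  #|[set j : 'I_n | ((j < i) && (i < s i) && (s i < s j))
                   || ((s j < s i) && (s i <= i) && (i < j))]|.

Definition cros_i s (i : 'I_n) : nat :=
  #|[set j : 'I_n | ((j < i) && (i < s j) && (s j < s i))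
                   || ((s i < s j) && (s j <= i) && (i < j))]|.

Definition nest s : nat := \sum_(i : 'I_n) nest_i s i.
Definition cros s : nat := \sum_(i : 'I_n) cros_i s i.

Definition sigma1 s (k : nat) : nat :=
  match k with
  | 0 => k
  | m.+1 => match @insub _ (fun m => m < n) _ m with
            | Some i => (val (s i)).+1
            | None => k
            end
  end.

Definition sigma_star s (k : nat) : nat :=
  if k == 0 then n else (sigma1 s k).-1.

(* cpk* sigma = #{i in [n-1] : inv(sigma_star)(i) < i > sigma*(i)} *)
Definition cpk_star s : nat :=
  #|[set i : 'I_n | (0 < val i)
      && [exists k : 'I_n.+1, (sigma_star s k == i) && (val k < i)]
      && (sigma_star s i < i)]|.

End Stats.

Definition A_poly (R : ringType) (n : nat) (p q t : R) : R :=
  \sum_(s : 'S_n) p ^+ nest s * q ^+ cros s * t ^+ exc s.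

Definition P_ncce (R : ringType) (n : nat) (p q y t : R) : R :=
  \sum_(s : 'S_n) p ^+ nest s * q ^+ cros s * y ^+ cpk_star s * t ^+ exc s.

(* Main.v *)
Require Import Defs.
From mathcomp Require Import all_boot all_order all_algebra all_fingroup.
From mathcomp Require Import zify ring.
Set Implicit Arguments. Unset Strict Implicit. Unset Printing Implicit Defensive.
Import GRing.Theory.


Definition relN (si ei sk ek : nat) : bool :=
  ((sk < si) && (si < ei) && (ei < ek)) || ((ek < ei) && (ei < si) && (si < sk)).
Definition relC (si ei sk ek : nat) : bool :=
  ((sk < si) && (si < ek) && (ek < ei)) || ((ei < ek) && (ek < si) && (si < sk)).
Definition relD (m : nat) (si ei sk ek : nat) : bool :=
  (m <= si) && (ek == si.+1) && (ei < si) && (sk < ek).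

Definition pairsum a (ps pt : nat -> nat) (s : 'S_a) (rel : nat -> nat -> nat -> nat -> bool) : nat :=
  \sum_(i : 'I_a) \sum_(k : 'I_a) rel (ps i) (pt (s i)) (ps k) (pt (s k)).
Definition excG m a (ps pt : nat -> nat) (s : 'S_a) : nat :=
  \sum_(i : 'I_a) ((m <= ps i) && (ps i < pt (s i))).
Definition tcG m a (ps pt : nat -> nat) (s : 'S_a) : nat :=
  \sum_(i : 'I_a) ((pt (s i) == m) && (ps i < m)).
Definition Lc (m s e : nat) : bool := ((s < m) ==> (m <= e)) && ((e < m) ==> (m <= s)).
Definition cstr m a (ps pt : nat -> nat) (s : 'S_a) : bool :=
  [forall i : 'I_a, Lc m (ps i) (pt (s i))].


Section W.
Variable R : comRingType.
Variables p q y T : R.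
Definition wG m a ps pt (s : 'S_a) : R :=
  p ^+ pairsum ps pt s relN * q ^+ pairsum ps pt s relC *
  y ^+ pairsum ps pt s (relD m) * T ^+ excG m ps pt s.
Definition Zs m a ps pt : R := \sum_(s : 'S_a | cstr m ps pt s) wG m ps pt s.
Definition Zt (z : R) m a ps pt : R :=
  \sum_(s : 'S_a | cstr m ps pt s) z ^+ tcG m ps pt s * wG m ps pt s.
Definition br (h : nat) : R := \sum_(j < h) p ^+ j * q ^+ (h.-1 - j).
Fixpoint G (k g : nat) : R :=
  match k with
  | 0 => (g == 0%N)%:R
  | k'.+1 => T * G k' g.+1 + (1 + T) * br g.+1 * G k' g + y * br g.+1 * br g * G k' g.-1
  end.
End W.

Record cfg a (ps pt : nat -> nat) m ms mt vs vt ks kt : Prop := Cfg {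
  c_ps : forall i j, (ps i < ps j) = (i < j);
  c_pt : forall i j, (pt i < pt j) = (i < j);
  c_dis : forall i j, ps i != pt j;
  c_as : a = vs + ks;
  c_at : a = vt + kt;
  c_vs : forall i, i < vs -> ps i < m;
  c_vt : forall j, j < vt -> pt j < m;
  c_ks : forall r, r < ks -> ps (vs + r) = ms + 2 * r;
  c_kt : forall r, r < kt -> pt (vt + r) = mt + 2 * r }.



Lemma mono_inj (f : nat -> nat) : (forall i j, (f i < f j) = (i < j)) -> injective f.
Proof.
move=> h i j e; apply/eqP; case: (ltngtP i j) => // c.
  by move: c; rewrite -h e ltnn.
by move: c; rewrite -h e ltnn.
Qed.

Lemma bump_mono h i j : (bump h i < bump h j) = (i < j).
Proof. rewrite /bump; case: (leqP h i); case: (leqP h j) => /= *; lia. Qed.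

Lemma sum_lift_perm (R : comRingType) a (i0 j0 : 'I_a.+1) (F : 'S_a.+1 -> R) :
  (\sum_(s : 'S_a.+1 | s i0 == j0) F s = \sum_(s : 'S_a) F (lift_perm i0 j0 s))%R.
Proof.
rewrite (reindex (lift_perm i0 j0)); last first.
  pose ulsf i (s : 'S_a.+1) k := odflt k (unlift (s i) (s (lift i k))).
  have ulsfK i (s : 'S_a.+1) k: lift (s i) (ulsf i s k) = s (lift i k).
    rewrite /ulsf; have:= neq_lift i k.
    by rewrite -(can_eq (permK s)) => /unlift_some[] ? ? ->.
  have inj_ulsf: injective (ulsf i0 _).
    move=> s; apply: can_inj (ulsf (s i0) s^-1%g) _ => k'.
    by rewrite {1}/ulsf ulsfK !permK liftK.
  exists (fun s => perm (inj_ulsf s)) => [s _ | s].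
    by apply/permP=> k'; rewrite permE /ulsf lift_perm_lift lift_perm_id liftK.
  move/(s _ =P _) => si0; apply/permP=> k.
  case: (unliftP i0 k) => [k'|] ->; rewrite ?lift_perm_id //.
  by rewrite lift_perm_lift -si0 permE ulsfK.
by apply: eq_bigl => s; rewrite lift_perm_id eqxx.
Qed.

Lemma sum_lift_perm_cond (R : comRingType) a (i0 j0 : 'I_a.+1) (P : pred 'S_a.+1) (F : 'S_a.+1 -> R) :
  (\sum_(s : 'S_a.+1 | (s i0 == j0) && P s) F s =
  \sum_(s : 'S_a | P (lift_perm i0 j0 s)) F (lift_perm i0 j0 s))%R.
Proof. by rewrite big_mkcondr /= sum_lift_perm [in RHS]big_mkcond. Qed.

Lemma pairsum_lift a (ps pt : nat -> nat) (s' : 'S_a) (i0 j0 : 'I_a.+1) rel :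
  (forall x y, rel x y x y = false) ->
  pairsum ps pt (lift_perm i0 j0 s') rel =
  (\sum_(k : 'I_a.+1) rel (ps i0) (pt (lift_perm i0 j0 s' i0)) (ps k) (pt (lift_perm i0 j0 s' k))
  + \sum_(i : 'I_a.+1) rel (ps i) (pt (lift_perm i0 j0 s' i)) (ps i0) (pt (lift_perm i0 j0 s' i0))
  + pairsum (fun n => ps (bump i0 n)) (fun n => pt (bump j0 n)) s' rel)%N.
Proof.
move=> irr; rewrite /pairsum (bigD1_ord i0) //= [X in (_ + X + _)%N](bigD1_ord i0) //= irr add0n.
rewrite -addnA; congr addn; rewrite -big_split; apply: eq_bigr => i' _ /=.
rewrite (bigD1_ord i0) //=; congr addn; apply: eq_bigr => k' _.
by rewrite !lift_perm_lift.
Qed.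

Lemma sum1_lift a (ps pt : nat -> nat) (s' : 'S_a) (i0 j0 : 'I_a.+1) (f : nat -> nat -> nat) :
  (\sum_(i : 'I_a.+1) f (ps i) (pt (lift_perm i0 j0 s' i)) =
  f (ps i0) (pt j0) + \sum_(i : 'I_a) f (ps (bump i0 i)) (pt (bump j0 (s' i))))%N.
Proof.
rewrite (bigD1_ord i0) //= lift_perm_id; congr addn; apply: eq_bigr => i _.
by rewrite lift_perm_lift.
Qed.

Lemma forall_lift a (i0 : 'I_a.+1) (P : pred 'I_a.+1) :
  [forall i, P i] = P i0 && [forall i' : 'I_a, P (lift i0 i')].
Proof.
apply/forallP/andP => [h | [h1 /forallP h2] i]; first by split => //; apply/forallP.
by case: (unliftP i0 i) => [j|] ->.
Qed.

Lemma sum_lt n c : c <= n -> (\sum_(l < n) (l < c) = c)%N.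
Proof.
elim: n => [|n IH] hc; first by rewrite big_ord0; case: c hc.
rewrite big_ord_recr /=; case: (ltnP n c) => h.
  have -> : c = n.+1 by lia.
  rewrite (eq_bigr (fun _ => 1%N)) => [|l _]; last by rewrite ltnS ltnW.
  by rewrite sum_nat_const card_ord muln1 addn1.
by rewrite /= addn0 IH.
Qed.

Lemma sum_perm a (s : 'S_a) (f : 'I_a -> nat) : (\sum_(k < a) f (s k) = \sum_(l < a) f l)%N.
Proof. by rewrite [RHS](reindex_inj (@perm_inj _ s)). Qed.

Lemma sum_between n c d : c < d -> d <= n ->
  (\sum_(l < n) ((c < l) && (l < d)) = d.-1 - c)%N.
Proof.
move=> cd dn.
have e : forall l : 'I_n, ((c < l) && (l < d) : nat) = ((l < d) : nat) - ((l < c.+1) : nat).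
  by move=> l; case: (ltnP c l); case: (ltnP l d) => //= *; lia.
rewrite (eq_bigr _ (fun l _ => e l)).
have h : forall l : 'I_n, ((l < c.+1) : nat) <= (l < d).
  by move=> l; case: (ltnP l c.+1); case: (ltnP l d) => //= *; lia.
rewrite sumnB; last by move=> l _; apply: h.
rewrite !sum_lt //; lia.
Qed.

Lemma Lc_shift m s e : s != m -> e != m -> Lc m s e = Lc m.+1 s e.
Proof. rewrite /Lc => h1 h2; apply/idP/idP; lia. Qed.

Lemma relD_shift m s e s' e' : s != m -> relD m s e s' e' = relD m.+1 s e s' e'.
Proof. rewrite /relD => h; apply/idP/idP; lia. Qed.

Lemma excf_shift m s e : s != m -> ((m <= s) && (s < e)) = ((m.+1 <= s) && (s < e)).
Proof. move=> h; apply/idP/idP; lia. Qed.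

Lemma mono_eq (f : nat -> nat) : (forall i j, (f i < f j) = (i < j)) -> forall i j, (f i == f j) = (i == j).
Proof.
move=> h i j; apply/eqP/eqP => [e|->] //; apply/eqP; case: (ltngtP i j) => // c.
  by move: c; rewrite -h e ltnn.
by move: c; rewrite -h e ltnn.
Qed.

Section SFacts.
Variables (a : nat) (ps pt : nat -> nat) (m vs vt ks kt : nat).
Hypothesis H : cfg a ps pt m m m.+1 vs vt ks.+1 kt.

Lemma S_psvs : ps vs = m.
Proof. by have := c_ks H (ltn0Sn ks); rewrite addn0 muln0 addn0. Qed.

Lemma S_pseq i : (ps i == m) = (i == vs).
Proof. by rewrite -S_psvs (mono_eq (c_ps H)). Qed.

Lemma S_ptneq j : pt j != m.
Proof. by rewrite -S_psvs eq_sym (c_dis H). Qed.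

Lemma S_ptlt j : j < a -> (pt j < m) = (j < vt).
Proof.
move=> ja; apply/idP/idP; last exact: (c_vt H).
case: (ltnP j vt) => // jv.
have := c_kt H (_ : j - vt < kt); rewrite subnKC // => h; rewrite h; first lia.
by have := c_at H; lia.
Qed.
End SFacts.

Section TFacts.
Variables (a : nat) (ps pt : nat -> nat) (m vs vt ks kt : nat).
Hypothesis H : cfg a ps pt m m.+1 m vs vt ks kt.+1.

Lemma T_ptvt : pt vt = m.
Proof. by have := c_kt H (ltn0Sn kt); rewrite addn0 muln0 addn0. Qed.

Lemma T_pteq j : (pt j == m) = (j == vt).
Proof. by rewrite -T_ptvt (mono_eq (c_pt H)). Qed.

Lemma T_psneq i : ps i != m.
Proof. by rewrite -T_ptvt (c_dis H). Qed.

Lemma T_pslt i : i < a -> (ps i < m) = (i < vs).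
Proof.
move=> ia; apply/idP/idP; last exact: (c_vs H).
case: (ltnP i vs) => // iv.
have := c_ks H (_ : i - vs < ks); rewrite subnKC // => h; rewrite h; first lia.
by have := c_as H; lia.
Qed.
End TFacts.

Section Steps.
Variables (R : comRingType) (p q y T : R).

Lemma S_close_j a ps pt m vs vt ks kt (H : cfg a.+1 ps pt m m m.+1 vs vt ks.+1 kt)
  (j : 'I_a.+1) (hj : j < vt) (hvs : vs < a.+1) :
  (\sum_(s' : 'S_a | cstr m ps pt (lift_perm (Ordinal hvs) j s'))
      wG p q y T m ps pt (lift_perm (Ordinal hvs) j s')
  = p ^+ j * q ^+ (vt.-1 - j) *
    Zt p q y T y m.+1 a (fun n => ps (bump vs n)) (fun n => pt (bump j n)))%R.
Proof.
set i0 := Ordinal hvs.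
have psi0 : ps i0 = m by apply: S_psvs H.
have ptjm : pt j < m by rewrite (S_ptlt H) ?ltn_ord.
have vta : vt <= a.+1 by have := c_at H; lia.
have psl : forall n, ps (bump vs n) != m.
  by move=> n; rewrite (S_pseq H); apply/eqP => e; move: (neq_bump vs n); rewrite e eqxx.
rewrite /Zt mulr_sumr; apply: eq_big => [s'|s' hs'].
  rewrite /cstr (forall_lift i0) lift_perm_id psi0 /Lc ltnn ptjm leqnn /=.
  apply/eq_forallb => i'; rewrite lift_perm_lift; apply: Lc_shift; first exact: psl.
  exact: (S_ptneq H).
set s := lift_perm i0 j s'.
have hLc : forall k : 'I_a.+1, Lc m (ps k) (pt (s k)) by move/forallP: hs'.
have si0 : s i0 = j by rewrite /s lift_perm_id.
have sk_eq : forall k : 'I_a.+1, (s k == j) = (k == i0).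
  by move=> k; rewrite -si0 (inj_eq (@perm_inj _ s)).
have psk : forall k : 'I_a.+1, ps k = m -> s k = j.
  move=> k e; apply/eqP; rewrite sk_eq; apply/eqP/val_inj => /=.
  by apply/eqP; rewrite -(S_pseq H) e.
have irrN : forall x z, relN x z x z = false by move=> *; rewrite /relN; lia.
have irrC : forall x z, relC x z x z = false by move=> *; rewrite /relC; lia.
have irrD : forall x z, relD m x z x z = false by move=> *; rewrite /relD; lia.
rewrite /wG !pairsum_lift // -/s si0 psi0.
have N1 : (\sum_(k < a.+1) relN m (pt j) (ps k) (pt (s k)) = j)%N.
  rewrite (eq_bigr (fun k => (s k < j) : nat)) => [|k _].
    by rewrite (sum_perm s (fun l => (l < j) : nat)) sum_lt // ltnW.
  rewrite -(c_pt H); have := hLc k; have := psk k; rewrite /relN /Lc.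
  move=> h1 h2; have h3 : ps k = m -> pt (s k) = pt j by move=> /h1 ->.
  move: h3 h2 ptjm; move: (pt (s k)) (ps k) (pt j) => e x e0 *.
  congr (nat_of_bool _); apply/idP/idP; lia.
have N2 : (\sum_(i < a.+1) relN (ps i) (pt (s i)) m (pt j) = 0)%N.
  apply: big1 => i _; apply/eqP; rewrite eqb0; have := hLc i; move: ptjm.
  rewrite /relN /Lc; move: (pt (s i)) (ps i) (pt j) => e x e0 *; apply/negP; lia.
have C2 : (\sum_(i < a.+1) relC (ps i) (pt (s i)) m (pt j) = 0)%N.
  apply: big1 => i _; apply/eqP; rewrite eqb0; have := hLc i; move: ptjm.
  rewrite /relC /Lc; move: (pt (s i)) (ps i) (pt j) => e x e0 *; apply/negP; lia.
have D2 : (\sum_(i < a.+1) relD m (ps i) (pt (s i)) m (pt j) = 0)%N.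
  apply: big1 => i _; apply/eqP; rewrite eqb0; move: ptjm.
  rewrite /relD; move: (pt (s i)) (ps i) (pt j) => e x e0 *; apply/negP; lia.
have C1 : (\sum_(k < a.+1) relC m (pt j) (ps k) (pt (s k)) = vt.-1 - j)%N.
  rewrite (eq_bigr (fun k => ((j < s k) && (s k < vt)) : nat)) => [|k _].
    by rewrite (sum_perm s (fun l => ((j < l) && (l < vt)) : nat)) sum_between.
  rewrite -(c_pt H) -(S_ptlt H) ?ltn_ord //.
  have := hLc k; have := psk k; rewrite /relC /Lc.
  move=> h1 h2; have h3 : ps k = m -> pt (s k) = pt j by move=> /h1 ->.
  move: h3 h2 ptjm; move: (pt (s k)) (ps k) (pt j) => e x e0 *.
  congr (nat_of_bool _); apply/idP/idP; lia.
have D1 : (\sum_(k < a.+1) relD m m (pt j) (ps k) (pt (s k)) =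
     tcG m.+1 (fun n => ps (bump vs n)) (fun n => pt (bump j n)) s')%N.
  rewrite (eq_bigr (fun k => ((pt (s k) == m.+1) && (ps k < m.+1)) : nat)) => [|k _].
    rewrite /s (@sum1_lift _ ps pt s' i0 j (fun x e => ((e == m.+1) && (x < m.+1)) : nat)).
    by have -> : (pt j == m.+1) = false by apply/negP; lia.
  move: ptjm; rewrite /relD; move: (pt (s k)) (ps k) (pt j) => e x e0 *.
  congr (nat_of_bool _); apply/idP/idP; lia.
have X1 : excG m ps pt s = excG m.+1 (fun n => ps (bump vs n)) (fun n => pt (bump j n)) s'.
  rewrite /excG /s (@sum1_lift _ ps pt s' i0 j (fun x e => ((m <= x) && (x < e)) : nat)).
  have -> : ((m <= ps i0) && (ps i0 < pt j)) = false by rewrite psi0; apply/negP; lia.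
  by rewrite add0n; apply: eq_bigr => i _; rewrite excf_shift.
have D3 : pairsum (fun n => ps (bump i0 n)) (fun n => pt (bump j n)) s' (relD m) =
          pairsum (fun n => ps (bump vs n)) (fun n => pt (bump j n)) s' (relD m.+1).
  by apply: eq_bigr => i _; apply: eq_bigr => k _; rewrite relD_shift.
rewrite N1 N2 C1 C2 D1 D2 X1 D3 !addn0 !exprD.
rewrite /wG; ring.
Qed.
Lemma sum_ord_narrow n c (F : nat -> R) : c <= n ->
  (\sum_(j < n | (j < c)%N) F j = \sum_(j < c) F j)%R.
Proof.
move=> cn; rewrite -(big_mkord (fun j => j < c)) -[RHS](big_mkord xpredT).
by rewrite (big_nat_widen _ _ _ _ _ cn).
Qed.

Lemma relD_shift2 m x e x' e' : (x = m -> m < e) -> relD m x e x' e' = relD m.+1 x e x' e'.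
Proof. rewrite /relD => h; apply/idP/idP; lia. Qed.

Lemma S_step a ps pt m vs vt ks kt (H : cfg a.+1 ps pt m m m.+1 vs vt ks.+1 kt) :
  (Zs p q y T m a.+1 ps pt = T * Zs p q y T m.+1 a.+1 ps pt +
   \sum_(j < vt) p ^+ j * q ^+ (vt.-1 - j) *
     Zt p q y T y m.+1 a (fun n => ps (bump vs n)) (fun n => pt (bump j n)))%R.
Proof.
have hvs : vs < a.+1 by have := c_as H; lia.
have vta : vt <= a.+1 by have := c_at H; lia.
set i0 := Ordinal hvs.
have psi0 : ps i0 = m by apply: S_psvs H.
have pseq : forall i : 'I_a.+1, (ps i == m) = (i == i0).
  by move=> i; rewrite (S_pseq H).
rewrite /Zs (bigID (fun s : 'S_a.+1 => m < pt (s i0))) /=.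
congr (_ + _)%R.
  rewrite mulr_sumr; apply: eq_big => [s|s /andP[hc hi]].
    apply/andP/forallP => [[/forallP hc hi] i|hc].
      have := hc i; have := S_ptneq H (s i); have := pseq i.
      case: eqP => [->|ne].
        by move=> /esym/eqP -> _ _; move: hi; rewrite /Lc; move: (pt (s i0)) => e; lia.
      by move=> _; move: ne; rewrite /Lc; move: (ps i) (pt (s i)) => x e; lia.
    split.
      apply/forallP => i; have := hc i; have := S_ptneq H (s i).
      by rewrite /Lc; move: (ps i) (pt (s i)) => x e; lia.
    by have := hc i0; rewrite /Lc psi0; move: (pt (s i0)) => e; lia.
  have hx : forall i : 'I_a.+1, ps i = m -> m < pt (s i).
    by move=> i /eqP; rewrite pseq => /eqP ->.
  have D : pairsum ps pt s (relD m) = pairsum ps pt s (relD m.+1).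
    by apply: eq_bigr => i _; apply: eq_bigr => k _; rewrite relD_shift2 //; apply: hx.
  have X : excG m ps pt s = (excG m.+1 ps pt s).+1.
    rewrite /excG (eq_bigr (fun i : 'I_a.+1 => ((m.+1 <= ps i) && (ps i < pt (s i))) + (i == i0))%N).
      have E1 : (\sum_(i < a.+1) ((i == i0) : nat) = 1)%N.
        by rewrite (bigD1 i0) //= eqxx big1 // => i /negbTE ->.
      by rewrite big_split /= E1 addn1.
    move=> i _; case: (i =P i0) => [->|ne].
      by rewrite psi0 leqnn hi ltnn.
    rewrite excf_shift; first by rewrite /= addn0.
    by rewrite pseq; apply/eqP.
  by rewrite /wG D X exprS; ring.
rewrite (partition_big (fun s : 'S_a.+1 => s i0) (fun j : 'I_a.+1 => j < vt)) /=; last first.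
  move=> s /andP[_ h]; rewrite -(S_ptlt H) ?ltn_ord //; have := S_ptneq H (s i0).
  move: h; move: (pt (s i0)) => e h1 h2; by rewrite ltn_neqAle h2 leqNgt.
pose F := fun j : nat => (p ^+ j * q ^+ (vt.-1 - j) *
     Zt p q y T y m.+1 a (fun n => ps (bump vs n)) (fun n => pt (bump j n)))%R.
rewrite -(sum_ord_narrow F vta); apply: eq_bigr => j hj.
rewrite (eq_bigl (fun s : 'S_a.+1 => (s i0 == j) && cstr m ps pt s)) => [|s].
  by rewrite sum_lift_perm_cond /F (S_close_j H hj hvs).
case: eqP => [->|]; rewrite ?andbF ?andbT //=.
have : pt j < m by rewrite (S_ptlt H) ?ltn_ord.
by move: (pt j) => e h; rewrite -leqNgt ltnW ?andbT.
Qed.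

Lemma T_close_i a ps pt m vs vt ks kt (H : cfg a.+1 ps pt m m.+1 m vs vt ks kt.+1) z
  (i : 'I_a.+1) (hi : i < vs) (hvt : vt < a.+1) :
  (\sum_(s' : 'S_a | cstr m ps pt (lift_perm i (Ordinal hvt) s'))
      z ^+ tcG m ps pt (lift_perm i (Ordinal hvt) s') * wG p q y T m ps pt (lift_perm i (Ordinal hvt) s')
  = z * (p ^+ i * q ^+ (vs.-1 - i) *
    Zs p q y T m.+1 a (fun n => ps (bump i n)) (fun n => pt (bump vt n))))%R.
Proof.
set j0 := Ordinal hvt.
have ptj0 : pt j0 = m by apply: T_ptvt H.
have psim : ps i < m by rewrite (T_pslt H) ?ltn_ord.
have vsa : vs <= a.+1 by have := c_as H; lia.
have ptl : forall n, pt (bump vt n) != m.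
  by move=> n; rewrite (T_pteq H); apply/eqP => e; move: (neq_bump vt n); rewrite e eqxx.
rewrite /Zs !mulr_sumr; apply: eq_big => [s'|s' hs'].
  rewrite /cstr (forall_lift i) lift_perm_id ptj0 /Lc ltnn leqnn implybT /=.
  apply/eq_forallb => i'; rewrite lift_perm_lift; apply: Lc_shift; last exact: ptl.
  exact: (T_psneq H).
set s := lift_perm i j0 s'.
have hLc : forall k : 'I_a.+1, Lc m (ps k) (pt (s k)) by move/forallP: hs'.
have si0 : s i = j0 by rewrite /s lift_perm_id.
have sk_eq : forall k : 'I_a.+1, (s k == j0) = (k == i).
  by move=> k; rewrite -si0 (inj_eq (@perm_inj _ s)).
have ptk : forall k : 'I_a.+1, pt (s k) = m -> ps k = ps i.
  move=> k e; have h : s k == j0.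
    by apply/eqP/val_inj => /=; apply/eqP; rewrite -(T_pteq H) e.
  by move: h; rewrite sk_eq => /eqP ->.
have psn : forall n, ps n != m by move=> n; apply: (T_psneq H).
have irrN : forall x z, relN x z x z = false by move=> *; rewrite /relN; lia.
have irrC : forall x z, relC x z x z = false by move=> *; rewrite /relC; lia.
have irrD : forall x z, relD m x z x z = false by move=> *; rewrite /relD; lia.
have TC : tcG m ps pt s = 1%N.
  rewrite /tcG (eq_bigr (fun k : 'I_a.+1 => (k == i) : nat)) => [|k _].
    by rewrite (bigD1 i) //= eqxx big1 // => k /negbTE ->.
  rewrite -sk_eq -val_eqE /= -(T_pteq H); congr (nat_of_bool _); case: eqP => //= e.
  by rewrite (ptk _ e).
rewrite /wG !pairsum_lift // -/s si0 ptj0 TC.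
have N1 : (\sum_(k < a.+1) relN (ps i) m (ps k) (pt (s k)) = i)%N.
  rewrite (eq_bigr (fun k : 'I_a.+1 => (k < i) : nat)) => [|k _].
    by rewrite sum_lt // ltnW.
  rewrite -(c_ps H); have := hLc k; have := ptk k; move: psim; rewrite /relN /Lc.
  move: (pt (s k)) (ps k) (ps i) => e x x0 *.
  congr (nat_of_bool _); apply/idP/idP; lia.
have N2 : (\sum_(k < a.+1) relN (ps k) (pt (s k)) (ps i) m = 0)%N.
  apply: big1 => k _; apply/eqP; rewrite eqb0; have := hLc k; move: psim.
  rewrite /relN /Lc; move: (pt (s k)) (ps k) (ps i) => e x x0 *; apply/negP; lia.
have C1 : (\sum_(k < a.+1) relC (ps i) m (ps k) (pt (s k)) = 0)%N.
  apply: big1 => k _; apply/eqP; rewrite eqb0; have := hLc k; move: psim.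
  rewrite /relC /Lc; move: (pt (s k)) (ps k) (ps i) => e x x0 *; apply/negP; lia.
have C2 : (\sum_(k < a.+1) relC (ps k) (pt (s k)) (ps i) m = vs.-1 - i)%N.
  rewrite (eq_bigr (fun k : 'I_a.+1 => ((i < k) && (k < vs)) : nat)) => [|k _].
    by rewrite sum_between.
  rewrite -(c_ps H) -(T_pslt H) ?ltn_ord //.
  have := hLc k; have := ptk k; move: psim; rewrite /relC /Lc.
  move: (pt (s k)) (ps k) (ps i) => e x x0 *.
  congr (nat_of_bool _); apply/idP/idP; lia.
have D1 : (\sum_(k < a.+1) relD m (ps i) m (ps k) (pt (s k)) = 0)%N.
  apply: big1 => k _; apply/eqP; rewrite eqb0; move: psim.
  rewrite /relD; move: (pt (s k)) (ps k) (ps i) => e x x0 *; apply/negP; lia.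
have D2 : (\sum_(k < a.+1) relD m (ps k) (pt (s k)) (ps i) m = 0)%N.
  apply: big1 => k _; apply/eqP; rewrite eqb0.
  rewrite /relD; move: (pt (s k)) (ps k) (ps i) => e x x0 *; apply/negP; lia.
have X1 : excG m ps pt s = excG m.+1 (fun n => ps (bump i n)) (fun n => pt (bump vt n)) s'.
  rewrite /excG /s (@sum1_lift _ ps pt s' i j0 (fun x e => ((m <= x) && (x < e)) : nat)).
  have -> : ((m <= ps i) && (ps i < pt j0)) = false by apply/negP; lia.
  by rewrite add0n; apply: eq_bigr => k _; rewrite excf_shift.
have D3 : pairsum (fun n => ps (bump i n)) (fun n => pt (bump j0 n)) s' (relD m) =
          pairsum (fun n => ps (bump i n)) (fun n => pt (bump vt n)) s' (relD m.+1).
  by apply: eq_bigr => k _; apply: eq_bigr => l _; rewrite relD_shift.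
rewrite N1 N2 C1 C2 D1 D2 X1 D3 !addn0 !add0n !exprD.
rewrite /wG expr1; ring.
Qed.

Lemma T_step a ps pt m vs vt ks kt (H : cfg a.+1 ps pt m m.+1 m vs vt ks kt.+1) z :
  (Zt p q y T z m a.+1 ps pt = Zs p q y T m.+1 a.+1 ps pt +
   z * \sum_(i < vs) p ^+ i * q ^+ (vs.-1 - i) *
     Zs p q y T m.+1 a (fun n => ps (bump i n)) (fun n => pt (bump vt n)))%R.
Proof.
have hvt : vt < a.+1 by have := c_at H; lia.
have vsa : vs <= a.+1 by have := c_as H; lia.
set j0 := Ordinal hvt.
have ptj0 : pt j0 = m by apply: T_ptvt H.
have pteq : forall j : 'I_a.+1, (pt j == m) = (j == j0).
  by move=> j; rewrite (T_pteq H).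
have psn : forall n, ps n != m by move=> n; apply: (T_psneq H).
rewrite /Zt /Zs (bigID (fun s : 'S_a.+1 => m < ps ((s^-1)%g j0))) /=.
congr (_ + _)%R.
  apply: eq_big => [s|s /andP[hc hi]].
    have hk : forall k : 'I_a.+1, pt (s k) = m -> k = (s^-1)%g j0.
      by move=> k /eqP; rewrite pteq => /eqP e; rewrite -e permK.
    apply/andP/forallP => [[/forallP hc hi] k|hc].
      have := hc k; have := psn k; case: (pt (s k) =P m) => [e|ne].
        by rewrite e {1 3}(hk k e); move: hi; rewrite /Lc; move: (ps _) => x; lia.
      by move=> h1; rewrite Lc_shift //; apply/eqP.
    split.
      apply/forallP => k; have := hc k.
      by rewrite /Lc; move: (ps k) (pt (s k)) => x e; lia.
    by have := hc ((s^-1)%g j0); rewrite permKV ptj0 /Lc; move: (ps _) => x; lia.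
  have hk : forall k : 'I_a.+1, pt (s k) = m -> m < ps k.
    by move=> k /eqP; rewrite pteq => /eqP e; move: hi; rewrite -e permK.
  have TC : tcG m ps pt s = 0%N.
    apply: big1 => k _; apply/eqP; rewrite eqb0; have := hk k.
    by move: (pt (s k)) (ps k) => e x h; apply/negP; lia.
  have D : pairsum ps pt s (relD m) = pairsum ps pt s (relD m.+1).
    by apply: eq_bigr => k _; apply: eq_bigr => l _; rewrite relD_shift.
  have X : excG m ps pt s = excG m.+1 ps pt s.
    by apply: eq_bigr => k _; rewrite excf_shift.
  by rewrite TC expr0 mul1r /wG D X.
rewrite (partition_big (fun s : 'S_a.+1 => (s^-1)%g j0) (fun i : 'I_a.+1 => i < vs)) /=; last first.
  move=> s /andP[_ h]; rewrite -(T_pslt H) ?ltn_ord //; have := psn ((s^-1)%g j0).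
  by move: h; move: (ps _) => e h1 h2; rewrite ltn_neqAle h2 leqNgt.
pose F := fun i : nat => (p ^+ i * q ^+ (vs.-1 - i) *
     Zs p q y T m.+1 a (fun n => ps (bump i n)) (fun n => pt (bump vt n)))%R.
rewrite -(sum_ord_narrow F vsa) mulr_sumr; apply: eq_bigr => i hi.
rewrite (eq_bigl (fun s : 'S_a.+1 => (s i == j0) && cstr m ps pt s)) => [|s].
  by rewrite sum_lift_perm_cond /F (T_close_i H z hi hvt).
have -> : ((s^-1)%g j0 == i) = (s i == j0).
  by rewrite -(inj_eq (@perm_inj _ s)) permKV eq_sym.
case: eqP => [e|]; rewrite ?andbF ?andbT //=.
have : ps i < m by rewrite (T_pslt H) ?ltn_ord.
have -> : (s^-1)%g j0 = i by rewrite -e permK.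
by move: (ps i) => x h; rewrite -leqNgt ltnW ?andbT.
Qed.

End Steps.

Lemma monob (f : nat -> nat) h : (forall i j, (f i < f j) = (i < j)) ->
  forall i j, (f (bump h i) < f (bump h j)) = (i < j).
Proof. by move=> hf i j; rewrite hf bump_mono. Qed.

Lemma cS_open a ps pt m vs vt ks kt :
  cfg a ps pt m m m.+1 vs vt ks.+1 kt -> cfg a ps pt m.+1 m.+2 m.+1 vs.+1 vt ks kt.
Proof.
case=> h1 h2 h3 h4 h5 h6 h7 h8 h9; split.
- exact: h1.
- exact: h2.
- exact: h3.
- by rewrite h4 addSnnS.
- exact: h5.
- move=> i; rewrite ltnS leq_eqVlt => /orP[/eqP ->|/h6]; last by lia.
  by have := h8 0 (ltn0Sn _); rewrite addn0 muln0 addn0 => ->.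
- by move=> j /h7; lia.
- by move=> r hr; rewrite addSnnS h8 //; lia.
- by move=> r hr; rewrite h9.
Qed.

Lemma cS_close a ps pt m vs vt ks kt (j : nat) : j < vt ->
  cfg a.+1 ps pt m m m.+1 vs vt ks.+1 kt ->
  cfg a (fun n => ps (bump vs n)) (fun n => pt (bump j n)) m.+1 m.+2 m.+1 vs vt.-1 ks kt.
Proof.
move=> hj [h1 h2 h3 h4 h5 h6 h7 h8 h9]; split.
- exact: monob.
- exact: monob.
- by move=> ? ?; apply: h3.
- by lia.
- by lia.
- move=> i hi; have -> : bump vs i = i by rewrite /bump; case: leqP => // *; lia.
  by have := h6 i hi; lia.
- move=> i hi; have : bump j i < vt by rewrite /bump; case: (j <= i); lia.
  by move/h7; lia.
- move=> r hr; rewrite /bump leq_addr add1n -addnS h8 //; lia.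
- move=> r hr; rewrite /bump (_ : j <= vt.-1 + r); last by lia.
  rewrite add1n (_ : (vt.-1 + r).+1 = vt + r); last by lia.
  by rewrite h9.
Qed.

Lemma cT_open a ps pt m vs vt ks kt :
  cfg a ps pt m m.+1 m vs vt ks kt.+1 -> cfg a ps pt m.+1 m.+1 m.+2 vs vt.+1 ks kt.
Proof.
case=> h1 h2 h3 h4 h5 h6 h7 h8 h9; split.
- exact: h1.
- exact: h2.
- exact: h3.
- exact: h4.
- by rewrite h5 addSnnS.
- by move=> i /h6; lia.
- move=> i; rewrite ltnS leq_eqVlt => /orP[/eqP ->|/h7]; last by lia.
  by have := h9 0 (ltn0Sn _); rewrite addn0 muln0 addn0 => ->.
- by move=> r hr; rewrite h8.
- by move=> r hr; rewrite addSnnS h9 //; lia.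
Qed.

Lemma cT_close a ps pt m vs vt ks kt (i : nat) : i < vs ->
  cfg a.+1 ps pt m m.+1 m vs vt ks kt.+1 ->
  cfg a (fun n => ps (bump i n)) (fun n => pt (bump vt n)) m.+1 m.+1 m.+2 vs.-1 vt ks kt.
Proof.
move=> hi [h1 h2 h3 h4 h5 h6 h7 h8 h9]; split.
- exact: monob.
- exact: monob.
- by move=> ? ?; apply: h3.
- by lia.
- by lia.
- move=> j hj; have : bump i j < vs by rewrite /bump; case: (i <= j); lia.
  by move/h6; lia.
- move=> j hj; have -> : bump vt j = j by rewrite /bump; case: leqP => // *; lia.
  by have := h7 j hj; lia.
- move=> r hr; rewrite /bump (_ : i <= vs.-1 + r); last by lia.
  rewrite add1n (_ : (vs.-1 + r).+1 = vs + r); last by lia.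
  by rewrite h8.
- move=> r hr; rewrite /bump leq_addr add1n -addnS h9 //; lia.
Qed.

Section Main.
Variables (R : comRingType) (p q y T : R).

Lemma Zs_Zt1 m a ps pt : Zs p q y T m a ps pt = Zt p q y T 1 m a ps pt.
Proof. by apply: eq_bigr => s _; rewrite expr1n mul1r. Qed.

Lemma Zt_empty z a ps pt m ms mt vs vt :
  cfg a ps pt m ms mt vs vt 0 0 -> (Zt p q y T z m a ps pt = (a == 0)%:R)%R.
Proof.
case: a => [|a] H.
  rewrite /Zt (big_pred1 1%g) => [|s]; last first.
    rewrite /cstr; apply/forallP/eqP => [_|_ []//].
    by apply/permP => -[].
  rewrite /tcG /wG /pairsum /excG !big_ord0 /=.
  by rewrite !expr0 !mulr1.
rewrite /Zt big_pred0 // => s; apply/negbTE/negP => /forallP /(_ ord0).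
have h0 : 0 < vs by have := c_as H; lia.
have h1 : (s ord0 : nat) < vt by have := c_at H; have := ltn_ord (s ord0); lia.
have := c_vs H h0; have := c_vt H h1; rewrite /Lc.
by move: (ps _) (pt _) => x e; lia.
Qed.

Lemma Zs_empty a ps pt m ms mt vs vt :
  cfg a ps pt m ms mt vs vt 0 0 -> (Zs p q y T m a ps pt = (a == 0)%:R)%R.
Proof. by move=> H; rewrite Zs_Zt1 (Zt_empty _ H). Qed.
End Main.

Section Main2.
Variables (R : comRingType) (p q y T : R).
Local Open Scope ring_scope.

Lemma Z_G k : forall a ps pt m g h, h = g.+1 -> cfg a ps pt m m m.+1 g h k.+1 k ->
  Zs p q y T m a ps pt = G p q y T k g.
Proof.
elim: k => [|k IH] a ps pt m g h -> H.
  case: a H => [|a] H; first by have := c_as H; lia.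
  rewrite (S_step p q y T H) (Zs_empty _ _ _ _ (cS_open H)) /= mulr0 add0r.
  rewrite (eq_bigr (fun j : 'I_g.+1 => p ^+ j * q ^+ (g - j) * (g == 0%N)%:R)) => [|j _]; last first.
    by rewrite (Zt_empty _ _ _ _ _ (cS_close (ltn_ord j) H)) /=; congr (_ * _%:R); have := c_as H; lia.
  case: g {H} => [|g]; first by rewrite big_ord1 /= expr0 mul1r mulr1.
  by rewrite /= big1 // => j _; rewrite mulr0.
case: a H => [|a] H; first by have := c_as H; lia.
have [a' ea] : exists a', a = a'.+1 by exists (g + k); have := c_as H; lia.
subst a.
rewrite (S_step p q y T H) Zs_Zt1 (T_step p q y T (cS_open H)) mul1r.
rewrite (IH _ _ _ _ _ _ erefl (cT_open (cS_open H))).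
have hA : \sum_(i < g.+1) p ^+ i * q ^+ (g.+1.-1 - i) *
     Zs p q y T m.+2 a'.+1 (fun n => ps (bump i n)) (fun n => pt (bump g.+1 n)) =
     br p q g.+1 * G p q y T k g.
  rewrite /br mulr_suml; apply: eq_bigr => i _.
  by rewrite (IH _ _ _ _ _ _ erefl (cT_close (ltn_ord i) (cS_open H))).
have hB : forall j : 'I_g.+1,
    Zt p q y T y m.+1 a'.+1 (fun n => ps (bump g n)) (fun n => pt (bump j n)) =
    G p q y T k g + y * br p q g * G p q y T k g.-1.
  move=> j; have Hj := cS_close (ltn_ord j) H.
  rewrite (T_step p q y T Hj) (IH _ _ _ _ _ _ erefl (cT_open Hj)) -mulrA; congr (_ + y * _).
  rewrite /br mulr_suml; apply: eq_bigr => i _.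
  by rewrite (IH _ _ _ _ _ _ _ (cT_close (ltn_ord i) Hj)) //; have := ltn_ord i; lia.
rewrite hA (eq_bigr _ (fun j _ => congr1 _ (hB j))) -mulr_suml -/(br p q g.+1) /=.
ring.
Qed.
End Main2.

Lemma card_set_sum n (P : pred 'I_n) : #|[set j | P j]| = (\sum_j (P j : nat))%N.
Proof.
rewrite cardsE -sum1_card big_mkcond /=; apply: eq_bigr => j _.
by rewrite unfold_in; case: (P j).
Qed.

Definition ps0 (i : nat) := (2 * i).+1.
Definition pt0 (j : nat) := (2 * j)%N.

Lemma nest_link n (s : 'S_n) : nest s = pairsum ps0 pt0 s relN.
Proof.
apply: eq_bigr => i _; rewrite /nest_i card_set_sum; apply: eq_bigr => j _.
rewrite /relN /ps0 /pt0; congr (nat_of_bool _).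
move: (nat_of_ord i) (nat_of_ord j) (nat_of_ord (s i)) (nat_of_ord (s j)) => a b c d.
apply/idP/idP; lia.
Qed.

Lemma cros_link n (s : 'S_n) : cros s = pairsum ps0 pt0 s relC.
Proof.
apply: eq_bigr => i _; rewrite /cros_i card_set_sum; apply: eq_bigr => j _.
rewrite /relC /ps0 /pt0; congr (nat_of_bool _).
move: (nat_of_ord i) (nat_of_ord j) (nat_of_ord (s i)) (nat_of_ord (s j)) => a b c d.
apply/idP/idP; lia.
Qed.

Lemma exc_link n (s : 'S_n) : exc s = excG 1 ps0 pt0 s.
Proof.
rewrite /exc card_set_sum; apply: eq_bigr => i _.
rewrite /ps0 /pt0; congr (nat_of_bool _).
move: (nat_of_ord i) (nat_of_ord (s i)) => a b.
apply/idP/idP; lia.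
Qed.

Lemma sstar_S n (s : 'S_n) (i : 'I_n) : sigma_star s i.+1 = s i.
Proof.
rewrite /sigma_star /= /sigma1; case: insubP => [u _ hu|]; last by rewrite ltn_ord.
by rewrite /=; congr (nat_of_ord (s _)); apply: val_inj.
Qed.

Lemma sstar_0 n (s : 'S_n) : sigma_star s 0 = n.
Proof. by []. Qed.

Lemma cpk_link n (s : 'S_n) : cpk_star s = pairsum ps0 pt0 s (relD 1).
Proof.
case: n s => [|n] s; first by rewrite /cpk_star card_set_sum /pairsum !big_ord0.
rewrite /cpk_star card_set_sum /pairsum [LHS]big_ord_recl [RHS]big_ord_recr /=.
have -> : (\sum_(k < n.+1) relD 1 (ps0 (@ord_max n)) (pt0 (s ord_max)) (ps0 k) (pt0 (s k)) = 0)%N.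
  apply: big1 => k _; apply/eqP; rewrite eqb0 /relD /ps0 /pt0.
  have := ltn_ord (s k); move: (nat_of_ord (s k)) (nat_of_ord (s ord_max)) (nat_of_ord k) => a b c h.
  rewrite /= in h *; apply/negP; lia.
rewrite add0n addn0; apply: eq_bigr => i _.
set c : 'I_n.+1 := lift ord0 i.
set k0 := (s^-1)%g c.
have sk0 : s k0 = c by rewrite /k0 permKV.
have hc : (c : nat) = i.+1 by [].
have hg : (\sum_(k < n.+1) relD 1 (ps0 (widen_ord (leqnSn n) i)) (pt0 (s (widen_ord (leqnSn n) i)))
             (ps0 k) (pt0 (s k)) =
          ((k0 < i.+1) && (s (widen_ord (leqnSn n) i) <= i)))%N.
  rewrite (bigD1 k0) //= big1 ?addn0 => [|k hk].
    rewrite /relD /ps0 /pt0 sk0 hc /=.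
    move: (nat_of_ord (s (widen_ord (leqnSn n) i))) (nat_of_ord k0) (nat_of_ord i) => a b d.
    congr (nat_of_bool _); apply/idP/idP; lia.
  apply/eqP; rewrite eqb0 /relD /ps0 /pt0.
  have : (s k : nat) != i.+1.
    by rewrite -hc -sk0; apply: contra hk => /eqP /val_inj /perm_inj ->.
  move: (nat_of_ord (s (widen_ord (leqnSn n) i))) (nat_of_ord k) (nat_of_ord i) (nat_of_ord (s k)) => a b d e h.
  apply/negP; lia.
rewrite hg.
have -> : sigma_star s (lift ord0 i) = s (widen_ord (leqnSn n) i).
  by rewrite /= -(sstar_S s (widen_ord (leqnSn n) i)).
have hex : [exists k : 'I_n.+2, (sigma_star s k == bump 0 i) && (k < bump 0 i)] = (k0 < i).
  apply/existsP/idP => [[k /andP[/eqP e hk]]|h].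
    case: k e hk => [[|k'] hk'] /= e hk.
      by move: e; rewrite sstar_0 /bump leq0n add1n => e; have := ltn_ord i; lia.
    have hk'' : k' < n.+1 by [].
    move: e; rewrite (sstar_S s (Ordinal hk'')) => e.
    have : Ordinal hk'' = k0.
      by apply: (@perm_inj _ s); rewrite sk0; apply: val_inj; rewrite /= e.
    by move=> <- /=; move: hk; rewrite /bump leq0n add1n ltnS.
  exists (lift ord0 k0); rewrite /= /bump leq0n add1n (sstar_S s k0) sk0 eqxx /=.
  by rewrite add1n ltnS.
rewrite hex /bump leq0n add1n ltnS; congr (nat_of_bool _).
have e : (s k0 : nat) = i.+1 by rewrite sk0.
case: (ltngtP k0 i) => [h|h|h].
- by rewrite ltnS (ltnW h).
- by rewrite ltnS (leqNgt k0 i) h.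
- have -> : widen_ord (leqnSn n) i = k0 by apply: val_inj.
  by rewrite e ltnn !andbF.
Qed.

Lemma P_Zs (R : comRingType) n (p q y T : R) :
  P_ncce n p q y T = Zs p q y T 1 n ps0 pt0.
Proof.
rewrite /P_ncce /Zs; apply: eq_big => [s|s _].
  apply/esym/forallP => i; rewrite /Lc /ps0 /pt0.
  move: (nat_of_ord i) (nat_of_ord (s i)) => a b; lia.
by rewrite /wG nest_link cros_link cpk_link exc_link.
Qed.

Lemma cfg0 n : cfg n.+1 ps0 pt0 1 1 2 0 1 n.+1 n.
Proof.
split; rewrite /ps0 /pt0.
- by move=> i j; apply/idP/idP; lia.
- by move=> i j; apply/idP/idP; lia.
- by move=> i j; apply/eqP; lia.
- by [].
- by rewrite add1n.
- by [].
- by move=> j; lia.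
- by move=> r _; lia.
- by move=> r _; lia.
Qed.

Local Open Scope ring_scope.
Lemma G_subst (R : comRingType) (p q y T t c : R) :
  y * T = c ^+ 2 * t -> 1 + T = c * (1 + t) ->
  forall k g, T ^+ g * G p q y T k g = (c * t) ^+ g * c ^+ k * G p q 1 t k g.
Proof.
move=> hyT h1T; elim=> [|k IH] g.
  by case: g => [|g] /=; rewrite ?expr0 ?mul1r ?mulr1 ?mulr0.
have e1 := IH g.+1; have e2 := IH g.
case: g e1 e2 => [|g] e1 e2 /=.
  have -> : br p q 0 = 0 by rewrite /br big_ord0.
  rewrite !expr0 !mul1r in e2 *.
  have -> : T * G p q y T k 1 + (1 + T) * br p q 1 * G p q y T k 0 + y * br p q 1 * 0 * G p q y T k 0 =
            T ^+ 1 * G p q y T k 1 + (1 + T) * br p q 1 * G p q y T k 0 by rewrite expr1; ring.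
  rewrite e1 e2 h1T !exprS expr0; ring.
have e3 := IH g.
have -> : T ^+ g.+1 * (T * G p q y T k g.+2 + (1 + T) * br p q g.+2 * G p q y T k g.+1 +
          y * br p q g.+2 * br p q g.+1 * G p q y T k g) =
          T ^+ g.+2 * G p q y T k g.+2 + (1 + T) * br p q g.+2 * (T ^+ g.+1 * G p q y T k g.+1) +
          (y * T) * br p q g.+2 * br p q g.+1 * (T ^+ g * G p q y T k g).
  by rewrite !exprS; ring.
rewrite e1 e2 e3 hyT h1T !exprS; ring.
Qed.
Local Open Scope ring_scope.

Lemma A_P (R : comRingType) n (p q t : R) : A_poly n p q t = P_ncce n p q 1 t.
Proof. by apply: eq_bigr => s _; rewrite expr1n mulr1. Qed.

Lemma P_G (R : comRingType) n (p q y T : R) : P_ncce n.+1 p q y T = G p q y T n 0.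
Proof. by rewrite P_Zs (Z_G _ _ _ _ erefl (cfg0 n)). Qed.

Unset Implicit Arguments.
Theorem theorem3p1 (R : fieldType) (n : nat) (p q t x : R) :
  (0 < n)%N ->
  1 + x != 0 -> x + t != 0 -> 1 + x * t != 0 ->
  A_poly n p q t =
    ((1 + x * t) / (1 + x)) ^+ (n - 1) *
    P_ncce n p q ((1 + x) ^+ 2 * t / ((x + t) * (1 + x * t)))
                 ((x + t) / (1 + x * t)).
Proof.
case: n => [//|n] _ h1 h2 h3.
rewrite subn1 /= A_P !P_G.
set y := (1 + x) ^+ 2 * t / ((x + t) * (1 + x * t)).
set T := (x + t) / (1 + x * t).
set c := (1 + x) / (1 + x * t).
have hyT : y * T = c ^+ 2 * t.
  by rewrite /y /T /c; field; rewrite h2 h3.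
have h1T : 1 + T = c * (1 + t) by rewrite /T /c; field.
have hs := G_subst p q hyT h1T n 0.
rewrite !expr0 !mul1r in hs.
rewrite hs mulrA -exprMn.
have -> : (1 + x * t) / (1 + x) * c = 1 by rewrite /c; field; rewrite h1 h3.
by rewrite expr1n mul1r.
Qed.
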